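(* Let $G_1$ and $G_2$ be bow-free acyclic mixed graphs on the same node set $V$ with the same skeleton, such that for every path $(v_1,v_2,v_3)$ in the skeleton through three distinct nodes, $(v_1,v_2,v_3)$ is a collider in $G_1$ if and only if it is a collider in $G_2$. Then $G_1$ and $G_2$ are algebraically equivalent.
   Context: A mixed graph $G=(V,D,B)$ has directed edges $D$ and bidirected edges $B$; it is acyclic if it has no directed cycle, and bow-free if no pair of nodes is joined by both a directed and a bidirected edge. The skeleton of $G$ is the undirected graph on $V$ with an edge between two nodes iff they are joined by some edge of $G$. In a bow-free graph, a path $(v_1,v_2,v_3)$ through three distinct nodes along skeleton edges is a collider if both edges of $G$ on it have an arrowhead at $v_2$ (i.e. each is either bidirected or directed into $v_2$). The model of $G$ is $\mathcal M(G)=\{(I-\Lambda)^{-T}\Omega(I-\Lambda)^{-1}\}$ over real $\Lambda$ supported on $D$ with $I-\Lambda$ invertible and positive definite $\Omega$ with off-diagonal support in $B$. Two graphs are algebraically equivalent if their models have the same Zariski closure. *)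

(* Defs.v *)
(* real numbers are Stdlib's R. Nodes are 0..n-1 (nat < n);
   matrices are functions nat -> nat -> R, only entries with indices < n matter. *)
From Stdlib Require Import Reals Relations.
Open Scope R_scope.

Fixpoint rsum (k : nat) (f : nat -> R) : R :=
  match k with O => 0 | S k' => rsum k' f + f k' end.

Definition mat := nat -> nat -> R.
Definition idm (i j : nat) : R := if Nat.eqb i j then 1 else 0.

Record mixed_graph := MixedGraph {
  dir : nat -> nat -> Prop;
  bidir : nat -> nat -> Prop
}.

Definition wf_graph (n : nat) (G : mixed_graph) : Prop :=
  (forall i j, dir G i j -> (i < n)%nat /\ (j < n)%nat /\ i <> j) /\
  (forall i j, bidir G i j -> (i < n)%nat /\ (j < n)%nat /\ i <> j) /\
  (forall i j, bidir G i j -> bidir G j i).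

Definition acyclic (G : mixed_graph) : Prop :=
  forall i, ~ clos_trans nat (dir G) i i.

Definition bow_free (G : mixed_graph) : Prop :=
  forall i j, (dir G i j \/ dir G j i) -> ~ bidir G i j.

Definition skel (G : mixed_graph) (i j : nat) : Prop :=
  dir G i j \/ dir G j i \/ bidir G i j.

Definition arrowhead_at (G : mixed_graph) (u v : nat) : Prop :=
  dir G u v \/ bidir G u v.

Definition skel_path3 (n : nat) (G : mixed_graph) (v1 v2 v3 : nat) : Prop :=
  (v1 < n)%nat /\ (v2 < n)%nat /\ (v3 < n)%nat /\
  v1 <> v2 /\ v2 <> v3 /\ v1 <> v3 /\ skel G v1 v2 /\ skel G v2 v3.

Definition collider (n : nat) (G : mixed_graph) (v1 v2 v3 : nat) : Prop :=
  skel_path3 n G v1 v2 v3 /\ arrowhead_at G v1 v2 /\ arrowhead_at G v3 v2.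

Definition pos_def (n : nat) (W : mat) : Prop :=
  (forall i j, (i < n)%nat -> (j < n)%nat -> W i j = W j i) /\
  (forall v : nat -> R, (exists i, (i < n)%nat /\ v i <> 0) ->
     0 < rsum n (fun i => rsum n (fun j => v i * W i j * v j))).

(* M(G) = { (I - L)^{-T} W (I - L)^{-1} } *)
Definition in_model (n : nat) (G : mixed_graph) (S : mat) : Prop :=
  exists (L W Minv : mat),
    (forall i j, (i < n)%nat -> (j < n)%nat -> ~ dir G i j -> L i j = 0) /\
    (forall i j, (i < n)%nat -> (j < n)%nat ->
        rsum n (fun k => Minv i k * (idm k j - L k j)) = idm i j) /\
    (forall i j, (i < n)%nat -> (j < n)%nat ->
        rsum n (fun k => (idm i k - L i k) * Minv k j) = idm i j) /\
    pos_def n W /\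
    (forall i j, (i < n)%nat -> (j < n)%nat -> i <> j -> ~ bidir G i j -> W i j = 0) /\
    (forall i j, (i < n)%nat -> (j < n)%nat ->
        S i j = rsum n (fun k => rsum n (fun l => Minv k i * W k l * Minv l j))).

Inductive rpoly : Type :=
| PConst : R -> rpoly
| PVar : nat -> nat -> rpoly
| PAdd : rpoly -> rpoly -> rpoly
| PMul : rpoly -> rpoly -> rpoly.

(* evaluation at an n x n matrix; variables outside the range evaluate to 0 *)
Fixpoint peval (n : nat) (p : rpoly) (S : mat) : R :=
  match p with
  | PConst c => c
  | PVar i j => if andb (Nat.ltb i n) (Nat.ltb j n) then S i j else 0
  | PAdd p q => peval n p S + peval n q S
  | PMul p q => peval n p S * peval n q S
  end.

Definition zariski_closure (n : nat) (A : mat -> Prop) (S : mat) : Prop :=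
  forall p : rpoly, (forall T, A T -> peval n p T = 0) -> peval n p S = 0.

Definition alg_equivalent (n : nat) (G1 G2 : mixed_graph) : Prop :=
  forall S, zariski_closure n (in_model n G1) S <-> zariski_closure n (in_model n G2) S.

(* Main.v *)
Require Import Defs.
From Stdlib Require Import Reals Relations Lra Lia Psatz Classical ClassicalEpsilon.

Open Scope R_scope.

Lemma rsum_ext n f g : (forall k, (k < n)%nat -> f k = g k) -> rsum n f = rsum n g.
Proof. induction n; simpl; intros H; auto. rewrite IHn by (intros; apply H; lia). rewrite H by lia. auto. Qed.

Lemma rsum_add n f g : rsum n (fun k => f k + g k) = rsum n f + rsum n g.
Proof. induction n; simpl; [lra|]. rewrite IHn; lra. Qed.

Lemma rsum_mul_l n c f : c * rsum n f = rsum n (fun k => c * f k).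
Proof. induction n; simpl; [lra|]. rewrite <- IHn; lra. Qed.

Lemma rsum_mul_r n c f : rsum n f * c = rsum n (fun k => f k * c).
Proof. induction n; simpl; [lra|]. rewrite <- IHn; lra. Qed.

Lemma rsum_swap n m (f : nat -> nat -> R) :
  rsum n (fun i => rsum m (fun j => f i j)) = rsum m (fun j => rsum n (fun i => f i j)).
Proof.
  induction n; simpl.
  - induction m; simpl; auto. rewrite <- IHm; lra.
  - rewrite IHn. rewrite <- rsum_add. auto.
Qed.

Lemma rsum_zero n f : (forall k, (k < n)%nat -> f k = 0) -> rsum n f = 0.
Proof. induction n; simpl; intros H; auto. rewrite IHn by (intros; apply H; lia). rewrite H by lia. lra. Qed.

Lemma idm_sym i j : idm i j = idm j i.
Proof. unfold idm. destruct (Nat.eqb_spec i j), (Nat.eqb_spec j i); auto; subst; congruence. Qed.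

Lemma rsum_idm_l n i f : (i < n)%nat -> rsum n (fun k => idm i k * f k) = f i.
Proof.
  induction n; intros H; [lia|]. simpl.
  destruct (Nat.eq_dec i n).
  - subst. rewrite rsum_zero. unfold idm. rewrite Nat.eqb_refl. lra.
    intros k Hk. unfold idm. destruct (Nat.eqb_spec n k); [lia|lra].
  - rewrite IHn by lia. unfold idm. destruct (Nat.eqb_spec i n); [lia|lra].
Qed.

Lemma rsum_idm_r n i f : (i < n)%nat -> rsum n (fun k => f k * idm k i) = f i.
Proof.
  intros H. rewrite <- (rsum_idm_l n i f H). apply rsum_ext. intros. rewrite idm_sym. lra.
Qed.

Definition mmul (n : nat) (A B : mat) : mat := fun i j => rsum n (fun k => A i k * B k j).
Definition tr (A : mat) : mat := fun i j => A j i.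
Definition quad (n : nat) (A W B : mat) : mat :=
  fun i j => rsum n (fun k => rsum n (fun l => A k i * W k l * B l j)).

Lemma mmul_assoc n A B C i j : mmul n (mmul n A B) C i j = mmul n A (mmul n B C) i j.
Proof.
  unfold mmul.
  transitivity (rsum n (fun k => rsum n (fun m => A i m * B m k * C k j))).
  { apply rsum_ext; intros. rewrite rsum_mul_r. auto. }
  rewrite rsum_swap. apply rsum_ext; intros. rewrite rsum_mul_l. apply rsum_ext; intros. lra.
Qed.

Lemma mmul_ext_l n A A' B i j : (forall k, (k < n)%nat -> A i k = A' i k) -> mmul n A B i j = mmul n A' B i j.
Proof. intros H; unfold mmul; apply rsum_ext; intros; rewrite H; auto. Qed.
Lemma mmul_ext_r n A B B' i j : (forall k, (k < n)%nat -> B k j = B' k j) -> mmul n A B i j = mmul n A B' i j.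
Proof. intros H; unfold mmul; apply rsum_ext; intros; rewrite H; auto. Qed.

Lemma mmul_idm_l n B i j : (i < n)%nat -> mmul n idm B i j = B i j.
Proof. intros; unfold mmul; apply (rsum_idm_l n i (fun k => B k j)); auto. Qed.
Lemma mmul_idm_r n A i j : (j < n)%nat -> mmul n A idm i j = A i j.
Proof. intros; unfold mmul; apply (rsum_idm_r n j (fun k => A i k)); auto. Qed.

Lemma quad_eq n A W B i j : quad n A W B i j = mmul n (tr A) (mmul n W B) i j.
Proof. unfold quad, mmul, tr. apply rsum_ext; intros. rewrite rsum_mul_l. apply rsum_ext; intros. lra. Qed.

Lemma tr_mmul n X Y i j : tr (mmul n X Y) i j = mmul n (tr Y) (tr X) i j.
Proof. unfold tr, mmul. apply rsum_ext; intros; lra. Qed.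

Lemma quad_mmul n X Y W X' Y' i j :
  quad n (mmul n X Y) W (mmul n X' Y') i j = quad n Y (quad n X W X') Y' i j.
Proof.
  rewrite !quad_eq.
  transitivity (mmul n (mmul n (tr Y) (tr X)) (mmul n (mmul n W X') Y') i j).
  { apply eq_trans with (mmul n (mmul n (tr Y) (tr X)) (mmul n W (mmul n X' Y')) i j).
    - apply mmul_ext_l; intros; apply tr_mmul.
    - apply mmul_ext_r; intros; symmetry; apply mmul_assoc. }
  rewrite mmul_assoc. apply mmul_ext_r; intros.
  rewrite <- mmul_assoc. apply mmul_ext_l; intros. rewrite quad_eq. reflexivity.
Qed.

Lemma quad_idm n W i j : (i < n)%nat -> (j < n)%nat -> quad n idm W idm i j = W i j.
Proof.
  intros. rewrite quad_eq. unfold tr.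
  apply eq_trans with (mmul n idm (mmul n W idm) i j).
  - apply mmul_ext_l; intros; apply idm_sym.
  - rewrite mmul_idm_l by auto. apply mmul_idm_r; auto.
Qed.

Lemma quad_ext n A W W' B i j : (forall k l, (k < n)%nat -> (l < n)%nat -> W k l = W' k l) ->
  quad n A W B i j = quad n A W' B i j.
Proof. intros H; unfold quad; apply rsum_ext; intros; apply rsum_ext; intros; rewrite H; auto. Qed.

Open Scope R_scope.

Lemma quad_ext2 n A A' W B B' i j :
  (forall a, (a < n)%nat -> A a i = A' a i) -> (forall a, (a < n)%nat -> B a j = B' a j) ->
  quad n A W B i j = quad n A' W B' i j.
Proof. intros H1 H2; unfold quad; apply rsum_ext; intros; apply rsum_ext; intros. rewrite H1, H2 by auto; auto. Qed.

Lemma reparam n G S L W Minv P Q L' :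
  (forall i j, (i < n)%nat -> (j < n)%nat -> rsum n (fun k => Minv i k * (idm k j - L k j)) = idm i j) ->
  (forall i j, (i < n)%nat -> (j < n)%nat -> rsum n (fun k => (idm i k - L i k) * Minv k j) = idm i j) ->
  pos_def n W ->
  (forall i j, (i < n)%nat -> (j < n)%nat -> S i j = rsum n (fun k => rsum n (fun l => Minv k i * W k l * Minv l j))) ->
  (forall i j, (i < n)%nat -> (j < n)%nat -> mmul n P Q i j = idm i j) ->
  (forall i j, (i < n)%nat -> (j < n)%nat -> mmul n Q P i j = idm i j) ->
  (forall i j, (i < n)%nat -> (j < n)%nat -> idm i j - L' i j = mmul n (fun a b => idm a b - L a b) P i j) ->
  (forall i j, (i < n)%nat -> (j < n)%nat -> ~ dir G i j -> L' i j = 0) ->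
  (forall i j, (i < n)%nat -> (j < n)%nat -> i <> j -> ~ bidir G i j -> quad n P W P i j = 0) ->
  in_model n G S.
Proof.
  intros HM1 HM2 [Wsym Wpd] HS HPQ HQP HL' HLs HWs.
  set (IL := fun a b => idm a b - L a b).
  exists L', (quad n P W P), (mmul n Q Minv).
  split; [exact HLs|].
  split.
  { intros i j Hi Hj.
    change (mmul n (mmul n Q Minv) (fun k j => idm k j - L' k j) i j = idm i j).
    rewrite (mmul_ext_r n (mmul n Q Minv) _ (mmul n IL P)) by (intros; apply HL'; auto).
    rewrite mmul_assoc.
    rewrite (mmul_ext_r n Q _ P). { apply HQP; auto. }
    intros a Ha. rewrite <- mmul_assoc.
    rewrite (mmul_ext_l n _ idm). { apply mmul_idm_l; auto. }
    intros b Hb. apply HM1; auto. }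
  split.
  { intros i j Hi Hj.
    change (mmul n (fun i k => idm i k - L' i k) (mmul n Q Minv) i j = idm i j).
    rewrite (mmul_ext_l n _ (mmul n IL P)) by (intros; apply HL'; auto).
    rewrite mmul_assoc.
    rewrite (mmul_ext_r n IL _ Minv). { apply HM2; auto. }
    intros a Ha. rewrite <- mmul_assoc.
    rewrite (mmul_ext_l n _ idm). { apply mmul_idm_l; auto. }
    intros b Hb. apply HPQ; auto. }
  split.
  { split.
    - intros i j Hi Hj. unfold quad. rewrite rsum_swap. apply rsum_ext; intros. apply rsum_ext; intros.
      rewrite Wsym by auto. lra.
    - intros v [i0 [Hi0 Hv0]].
      set (V := fun (k _ : nat) => v k).
      assert (E : rsum n (fun i => rsum n (fun j => v i * quad n P W P i j * v j)) = quad n V (quad n P W P) V 0%nat 0%nat).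
      { unfold quad at 1, V. apply rsum_ext; intros. apply rsum_ext; intros. reflexivity. }
      rewrite E. rewrite <- quad_mmul.
      set (w := fun k => mmul n P V k 0%nat).
      change (0 < rsum n (fun k => rsum n (fun l => w k * W k l * w l))).
      apply Wpd.
      apply NNPP; intros Hno.
      apply Hv0.
      assert (Hw : forall k, (k < n)%nat -> w k = 0).
      { intros k Hk. apply NNPP; intros Hk'. apply Hno. exists k; auto. }
      transitivity (mmul n idm V i0 0%nat). { rewrite mmul_idm_l; auto. }
      rewrite (mmul_ext_l n _ (mmul n Q P)) by (intros; symmetry; apply HQP; auto).
      rewrite mmul_assoc. unfold mmul at 1. apply rsum_zero. intros k Hk.
      change (Q i0 k * w k = 0). rewrite Hw; auto; lra. }
  split; [exact HWs|].
  intros i j Hi Hj.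
  rewrite HS by auto.
  change (quad n Minv W Minv i j = quad n (mmul n Q Minv) (quad n P W P) (mmul n Q Minv) i j).
  rewrite quad_mmul.
  apply quad_ext. intros k l Hk Hl.
  rewrite <- quad_mmul.
  rewrite (quad_ext2 n _ idm W _ idm). { symmetry; apply quad_idm; auto. }
  - intros; apply HPQ; auto.
  - intros; apply HPQ; auto.
Qed.

Open Scope R_scope.

Definition Pm (u x : nat) (c1 c2 c3 c4 : R) : mat := fun k j =>
  idm k j + c1 * idm k u * idm j u + c2 * idm k u * idm j x + c3 * idm k x * idm j u + c4 * idm k x * idm j x.

Lemma sum_Pm_r n u x c1 c2 c3 c4 g j : (u < n)%nat -> (x < n)%nat -> (j < n)%nat ->
  rsum n (fun k => g k * Pm u x c1 c2 c3 c4 k j) =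
  g j + c1 * g u * idm j u + c2 * g u * idm j x + c3 * g x * idm j u + c4 * g x * idm j x.
Proof.
  intros Hu Hx Hj. unfold Pm.
  transitivity (rsum n (fun k => g k * idm k j + (c1 * idm j u) * (idm u k * g k) + (c2 * idm j x) * (idm u k * g k)
     + (c3 * idm j u) * (idm x k * g k) + (c4 * idm j x) * (idm x k * g k))).
  { apply rsum_ext; intros. rewrite (idm_sym k u), (idm_sym k x). ring. }
  rewrite !rsum_add. rewrite <- !rsum_mul_l. rewrite !rsum_idm_l by auto.
  rewrite rsum_idm_r by auto. ring.
Qed.

Lemma sum_Pm_l n u x c1 c2 c3 c4 g i : (u < n)%nat -> (x < n)%nat -> (i < n)%nat ->
  rsum n (fun k => Pm u x c1 c2 c3 c4 k i * g k) =
  g i + c1 * idm i u * g u + c2 * idm i x * g u + c3 * idm i u * g x + c4 * idm i x * g x.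
Proof.
  intros Hu Hx Hi. transitivity (rsum n (fun k => g k * Pm u x c1 c2 c3 c4 k i)).
  { apply rsum_ext; intros. ring. }
  rewrite sum_Pm_r by auto. ring.
Qed.

Lemma quad_Pm n u x c1 c2 c3 c4 W i j : (u < n)%nat -> (x < n)%nat -> (i < n)%nat -> (j < n)%nat ->
  quad n (Pm u x c1 c2 c3 c4) W (Pm u x c1 c2 c3 c4) i j =
  let h := fun a => W a j + c1 * W a u * idm j u + c2 * W a u * idm j x + c3 * W a x * idm j u + c4 * W a x * idm j x in
  h i + c1 * idm i u * h u + c2 * idm i x * h u + c3 * idm i u * h x + c4 * idm i x * h x.
Proof.
  intros Hu Hx Hi Hj. unfold quad. cbv zeta.
  transitivity (rsum n (fun k => Pm u x c1 c2 c3 c4 k i *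
     (W k j + c1 * W k u * idm j u + c2 * W k u * idm j x + c3 * W k x * idm j u + c4 * W k x * idm j x))).
  2:{ rewrite sum_Pm_l by auto. ring. }
  apply rsum_ext; intros k Hk.
  rewrite <- (sum_Pm_r n u x c1 c2 c3 c4 (fun l => W k l)) by auto.
  rewrite rsum_mul_l. apply rsum_ext; intros. ring.
Qed.

Lemma mmul_Pm n u x c1 c2 c3 c4 A i j : (u < n)%nat -> (x < n)%nat -> (j < n)%nat ->
  mmul n A (Pm u x c1 c2 c3 c4) i j =
  A i j + c1 * A i u * idm j u + c2 * A i u * idm j x + c3 * A i x * idm j u + c4 * A i x * idm j x.
Proof. intros; unfold mmul; apply (sum_Pm_r n u x c1 c2 c3 c4 (fun k => A i k)); auto. Qed.

Ltac dst := unfold Pm, idm; repeat match goal with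
  | |- context [Nat.eqb ?a ?b] => destruct (Nat.eqb_spec a b); try subst; try (exfalso; congruence)
  end.

Lemma PmQ_inv n u x c1 c2 c3 c4 d1 d2 d3 d4 i j : (u < n)%nat -> (x < n)%nat -> (j < n)%nat -> u <> x ->
  (1 + c1) * (1 + d1) + c2 * d3 = 1 ->
  (1 + c1) * d2 + c2 * (1 + d4) = 0 ->
  c3 * (1 + d1) + (1 + c4) * d3 = 0 ->
  c3 * d2 + (1 + c4) * (1 + d4) = 1 ->
  mmul n (Pm u x c1 c2 c3 c4) (Pm u x d1 d2 d3 d4) i j = idm i j.
Proof.
  intros Hu Hx Hj Hux E1 E2 E3 E4. rewrite mmul_Pm by auto.
  dst; lra.
Qed.

Close Scope R_scope.

Notation A := arrowhead_at.
Definition good n G := wf_graph n G /\ acyclic G /\ bow_free G.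

Lemma A_lt n G a b : wf_graph n G -> A G a b -> (a < n /\ b < n /\ a <> b)%nat.
Proof. intros [H1 [H2 H3]] [H|H]; auto. Qed.

Lemma bidir_sym n G a b : wf_graph n G -> bidir G a b -> bidir G b a.
Proof. intros [_ [_ H]]; auto. Qed.

Lemma dir_A n G a b : good n G -> dir G a b -> A G a b /\ ~ A G b a.
Proof.
  intros [W [Ac Bf]] H. split; [left; auto|]. intros [H'|H'].
  - apply (Ac a). eapply t_trans; apply t_step; eauto.
  - apply (Bf a b); auto. eapply bidir_sym; eauto.
Qed.

Lemma A_dir n G a b : good n G -> A G a b -> ~ A G b a -> dir G a b.
Proof. intros [W _] [H|H] H'; auto. exfalso; apply H'; right; eapply bidir_sym; eauto. Qed.

Lemma A_bidir n G a b : good n G -> A G a b -> A G b a -> bidir G a b.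
Proof.
  intros Hg H1 H2. destruct H1 as [H1|H1]; auto.
  exfalso. apply (proj2 (dir_A n G a b Hg H1)); auto.
Qed.

Lemma skel_iff n G a b : wf_graph n G -> (skel G a b <-> A G a b \/ A G b a).
Proof.
  intros W. unfold skel, arrowhead_at. split.
  - intros [H|[H|H]]; auto.
  - intros [[H|H]|[H|H]]; auto. right; right; eapply bidir_sym; eauto.
Qed.

Lemma acyc_new G G' z :
  (forall i, ~ dir G' i z) -> (forall i j, dir G' i j -> dir G i j \/ i = z) -> acyclic G -> acyclic G'.
Proof.
  intros Hz Hsub Ac.
  assert (K : forall a b, clos_trans nat (dir G') a b -> b <> z /\ (a = z \/ clos_trans nat (dir G) a b)).
  { intros a b H. induction H as [a b H|a y b H1 [IH1a IH1b] H2 [IH2a IH2b]].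
    - split. { intros ->. apply (Hz a H). }
      destruct (Hsub a b H); auto. right; apply t_step; auto.
    - split; auto. destruct IH2b as [->|IH2b]; [congruence|].
      destruct IH1b as [->|IH1b]; auto. right. eapply t_trans; eauto. }
  intros i H. destruct (K i i H) as [Hn [Hi|Hi]]; [congruence|]. apply (Ac i Hi).
Qed.

Definition gM1f G u x := MixedGraph (fun i j => dir G i j /\ ~ (i = u /\ j = x))
  (fun i j => bidir G i j \/ (i = u /\ j = x) \/ (i = x /\ j = u)).
Definition gM1b G u x := MixedGraph (fun i j => dir G i j \/ (i = u /\ j = x))
  (fun i j => bidir G i j /\ ~ (i = u /\ j = x) /\ ~ (i = x /\ j = u)).
Definition gM2 G u x := MixedGraph (fun i j => (dir G i j /\ ~ (i = u /\ j = x)) \/ (i = x /\ j = u))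
  (bidir G).

Lemma acyc_sub G G' : (forall i j, dir G' i j -> dir G i j) -> acyclic G -> acyclic G'.
Proof.
  intros Hs Ac i H. apply (Ac i).
  assert (K : forall a b, clos_trans nat (dir G') a b -> clos_trans nat (dir G) a b).
  { intros a b Hab; induction Hab. apply t_step; auto. eapply t_trans; eauto. }
  auto.
Qed.

Lemma good_M1f n G u x : good n G -> dir G u x -> good n (gM1f G u x).
Proof.
  intros Hg Hd. pose proof Hg as [[W1 [W2 W3]] [Ac Bf]].
  destruct (W1 u x Hd) as [Hu [Hx Hux]].
  split; [split; [|split]|split].
  - intros i j [H _]; auto.
  - intros i j [H|[[-> ->]|[-> ->]]]; auto.
  - intros i j [H|[[-> ->]|[-> ->]]]; simpl; auto.
  - apply (acyc_sub G); simpl; [intros i j [H _]; auto|auto].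
  - intros i j Hdd Hb. simpl in Hdd, Hb.
    destruct Hb as [Hb|[[-> ->]|[-> ->]]].
    + apply (Bf i j); auto. destruct Hdd as [[H _]|[H _]]; auto.
    + destruct Hdd as [[_ H]|[H _]]; [tauto|]. apply (proj2 (dir_A n G u x Hg Hd)); left; auto.
    + destruct Hdd as [[H _]|[_ H]]; [|tauto]. apply (proj2 (dir_A n G u x Hg Hd)); left; auto.
Qed.

Lemma good_M1b n G u x : good n G -> bidir G u x -> (forall y, A G y u -> y = x) -> good n (gM1b G u x).
Proof.
  intros Hg Hb Hh. pose proof Hg as [[W1 [W2 W3]] [Ac Bf]].
  destruct (W2 u x Hb) as [Hu [Hx Hux]].
  assert (Hxu : ~ dir G x u). { intros H. apply (Bf x u); auto. }
  split; [split; [|split]|split].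
  - intros i j [H|[-> ->]]; auto.
  - intros i j [H _]; auto.
  - intros i j [H [H1 H2]]; simpl; repeat split; auto; intros [? ?]; subst; tauto.
  - apply (acyc_new G _ u); simpl.
    + intros i [H|[_ H]]; [|congruence]. assert (i = x) by (apply Hh; left; auto). subst; auto.
    + intros i j [H|[-> _]]; auto.
    + auto.
  - intros i j Hdd [Hb' [H1 H2]]. simpl in Hdd.
    destruct Hdd as [[H|[-> ->]]|[H|[-> ->]]]; try tauto.
    + apply (Bf i j); auto.
    + apply (Bf i j); auto.
Qed.

Lemma good_M2 n G u x : good n G -> dir G u x -> (forall y, ~ A G y u) -> (forall y, A G y x -> y = u) ->
  good n (gM2 G u x).
Proof.
  intros Hg Hd Hn Hh. pose proof Hg as [[W1 [W2 W3]] [Ac Bf]].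
  destruct (W1 u x Hd) as [Hu [Hx Hux]].
  split; [split; [|split]|split].
  - intros i j [[H _]|[-> ->]]; auto.
  - auto.
  - auto.
  - apply (acyc_new G _ x); simpl.
    + intros i [[H H']|[_ H]]; [|congruence]. apply H'; split; auto. apply Hh; left; auto.
    + intros i j [[H _]|[-> _]]; auto.
    + auto.
  - intros i j Hdd Hb. simpl in Hdd, Hb.
    destruct Hdd as [[[H _]|[-> ->]]|[[H _]|[-> ->]]].
    + apply (Bf i j); auto.
    + apply (Hn x); right; auto.
    + apply (Bf i j); auto.
    + apply (Hn x); right; eapply bidir_sym; eauto. split; auto.
Qed.

Lemma A_M1f n G u x a b : good n G -> dir G u x -> (A (gM1f G u x) a b <-> A G a b \/ (a = x /\ b = u)).
Proof.
  intros Hg Hd. unfold arrowhead_at; simpl. split.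
  - intros [[H _]|[H|[[-> ->]|[-> ->]]]]; auto.
  - intros [[H|H]|[-> ->]].
    + destruct (classic (a = u /\ b = x)) as [[-> ->]|Hn]; [right; right; left; auto | left; auto].
    + right; left; auto.
    + right; right; right; auto.
Qed.

Lemma A_M1b n G u x a b : good n G -> bidir G u x -> (A (gM1b G u x) a b <-> A G a b /\ ~ (a = x /\ b = u)).
Proof.
  intros Hg Hb. pose proof Hg as [[W1 [W2 W3]] [Ac Bf]].
  destruct (W2 u x Hb) as [Hu [Hx Hux]].
  assert (Hxu : ~ dir G x u). { intros H. apply (Bf x u); auto. }
  unfold arrowhead_at; simpl. split.
  - intros [[H|[E1 E2]]|[H [H1 H2]]]; subst.
    + split; [left; auto|]. intros [E1 E2]; subst; auto.
    + split; [right; auto|]. intros [E1 E2]; subst; auto.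
    + split; [right; auto|]. auto.
  - intros [[H|H] H'].
    + left; left; auto.
    + destruct (classic (a = u /\ b = x)) as [[E1 E2]|Hn].
      * subst; left; right; auto.
      * right; auto.
Qed.

Lemma A_M2 n G u x a b : good n G -> dir G u x ->
  (A (gM2 G u x) a b <-> (A G a b /\ ~ (a = u /\ b = x)) \/ (a = x /\ b = u)).
Proof.
  intros Hg Hd. pose proof Hg as [[W1 [W2 W3]] [Ac Bf]].
  unfold arrowhead_at; simpl. split.
  - intros [[[H H']|H]|H]; auto.
    left; split; auto. intros [-> ->]. apply (Bf u x); auto.
  - intros [[[H|H] H']|H]; auto.
Qed.

Close Scope R_scope.

Definition ind (P : Prop) : nat := if excluded_middle_informative P then 1%nat else 0%nat.
Fixpoint nsum (k : nat) (f : nat -> nat) : nat := match k with O => O | S k' => (nsum k' f + f k')%nat end.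

Lemma nsum_le n f g : (forall k, (k < n)%nat -> (f k <= g k)%nat) -> (nsum n f <= nsum n g)%nat.
Proof. induction n; simpl; intros H; auto. specialize (IHn ltac:(intros; apply H; lia)). specialize (H n ltac:(lia)). lia. Qed.

Lemma nsum_lt n f g : (forall k, (k < n)%nat -> (f k <= g k)%nat) -> (exists k, (k < n)%nat /\ (f k < g k)%nat) ->
  (nsum n f < nsum n g)%nat.
Proof.
  induction n; simpl; intros H [k [Hk Hl]]; [lia|].
  destruct (Nat.eq_dec k n).
  - subst. pose proof (nsum_le n f g ltac:(intros; apply H; lia)). lia.
  - assert (nsum n f < nsum n g)%nat by (apply IHn; [intros; apply H; lia| exists k; split; auto; lia]).
    specialize (H n ltac:(lia)). lia.
Qed.

Lemma ind_le (P Q : Prop) : (P -> Q) -> (ind P <= ind Q)%nat.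
Proof. unfold ind; intros H; destruct (excluded_middle_informative P), (excluded_middle_informative Q); tauto || lia. Qed.

Lemma ind_lt (P Q : Prop) : ~ P -> Q -> (ind P < ind Q)%nat.
Proof. unfold ind; intros H1 H2; destruct (excluded_middle_informative P), (excluded_middle_informative Q); tauto || lia. Qed.

Definition MD G1 G2 u y := ~ (A G1 y u <-> A G2 y u).
Definition mdist n G1 G2 := nsum n (fun u => nsum n (fun y => ind (MD G1 G2 u y))).
Definition ac n G u := nsum n (fun z => ind (clos_trans nat (dir G) z u)).
Definition SK G1 G2 := forall i j, skel G1 i j <-> skel G2 i j.
Definition PC G1 G2 := (forall a b c, a <> b -> A G1 a c -> A G1 b c -> A G2 a c) /\
                       (forall a b c, a <> b -> A G2 a c -> A G2 b c -> A G1 a c).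
Definition atmost1 G z := forall a b, A G a z -> A G b z -> a = b.

Lemma mdist_lt n G1 G1' G2 :
  (forall c y, (c < n)%nat -> (y < n)%nat -> MD G1' G2 c y -> MD G1 G2 c y) ->
  (exists c y, (c < n)%nat /\ (y < n)%nat /\ MD G1 G2 c y /\ ~ MD G1' G2 c y) ->
  (mdist n G1' G2 < mdist n G1 G2)%nat.
Proof.
  intros H [c [y [Hc [Hy [H1 H2]]]]]. unfold mdist.
  apply nsum_lt.
  - intros k Hk. apply nsum_le. intros; apply ind_le; auto.
  - exists c; split; auto. apply nsum_lt.
    + intros; apply ind_le; auto.
    + exists y; split; auto. apply ind_lt; auto.
Qed.

Lemma ac_lt n G w u : good n G -> dir G w u -> (ac n G w < ac n G u)%nat.
Proof.
  intros [[W1 _] [Ac _]] Hd. destruct (W1 w u Hd) as [Hw _].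
  unfold ac. apply nsum_lt.
  - intros k Hk. apply ind_le. intros H. eapply t_trans; eauto. apply t_step; auto.
  - exists w; split; auto. apply ind_lt. apply Ac. apply t_step; auto.
Qed.

Lemma PC_preserve G1 G1' G2 : PC G1 G2 ->
  (forall z, (forall y, A G1' y z <-> A G1 y z) \/ (atmost1 G1' z /\ atmost1 G1 z)) -> PC G1' G2.
Proof.
  intros [P1 P2] Hz. split.
  - intros a b c Hab Ha Hb. destruct (Hz c) as [E|[E1 E2]].
    + apply (P1 a b c Hab); apply E; auto.
    + exfalso; apply Hab; apply E1; auto.
  - intros a b c Hab Ha Hb.
    pose proof (P2 a b c Hab Ha Hb). pose proof (P2 b a c (not_eq_sym Hab) Hb Ha).
    destruct (Hz c) as [E|[E1 E2]].
    + apply E; auto.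
    + exfalso; apply Hab; apply E2; auto.
Qed.

Lemma SK_preserve n G1 G1' G2 : wf_graph n G1 -> wf_graph n G1' -> SK G1 G2 ->
  (forall a b, A G1' a b \/ A G1' b a <-> A G1 a b \/ A G1 b a) -> SK G1' G2.
Proof.
  intros W1 W1' S H i j. rewrite <- (S i j). rewrite (skel_iff n G1' i j W1'), (skel_iff n G1 i j W1). apply H.
Qed.

Lemma model_same n G1 G2 : good n G1 -> good n G2 ->
  (forall c y, (c < n)%nat -> (y < n)%nat -> ~ MD G1 G2 c y) ->
  forall S, in_model n G1 S -> in_model n G2 S.
Proof.
  intros H1 H2 Hmd S [L [W [Minv [HL [HM1 [HM2 [HW [HWs HS]]]]]]]].
  assert (E : forall a b, (a < n)%nat -> (b < n)%nat -> (A G1 a b <-> A G2 a b)).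
  { intros a b Ha Hb. specialize (Hmd b a Hb Ha). unfold MD in Hmd. tauto. }
  exists L, W, Minv. refine (conj _ (conj HM1 (conj HM2 (conj HW (conj _ HS))))).
  - intros i j Hi Hj Hd. apply HL; auto. intros Hd1. apply Hd.
    apply (A_dir n G2 i j H2).
    + apply E; auto. left; auto.
    + rewrite <- E by auto. apply (proj2 (dir_A n G1 i j H1 Hd1)).
  - intros i j Hi Hj Hij Hb. apply HWs; auto. intros Hb1. apply Hb.
    apply (A_bidir n G2 i j H2).
    + apply E; auto. right; auto.
    + apply E; auto. right; eapply bidir_sym; eauto. apply H1.
Qed.

Open Scope R_scope.

Lemma diag_pos n W u : pos_def n W -> (u < n)%nat -> 0 < W u u.
Proof.
  intros [_ Hp] Hu. specialize (Hp (fun k => idm u k)).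
  assert (E : rsum n (fun i => rsum n (fun j => idm u i * W i j * idm u j)) = W u u).
  { transitivity (rsum n (fun i => idm u i * W i u)).
    - apply rsum_ext; intros i Hi. rewrite <- (rsum_idm_r n u (fun j => idm u i * W i j)) by auto.
      apply rsum_ext; intros; rewrite (idm_sym u k); ring.
    - apply (rsum_idm_l n u (fun i => W i u)); auto. }
  rewrite <- E. apply Hp. exists u; split; auto. unfold idm; rewrite Nat.eqb_refl; lra.
Qed.

Lemma idm_prod0 i j u x : ~ (i = u /\ j = x) -> idm i u * idm j x = 0.
Proof. intros H; unfold idm; destruct (Nat.eqb_spec i u), (Nat.eqb_spec j x); subst; try tauto; ring. Qed.

Lemma idm_eq i : idm i i = 1.
Proof. unfold idm; rewrite Nat.eqb_refl; auto. Qed.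
Lemma idm_neq i j : i <> j -> idm i j = 0.
Proof. intros; unfold idm; destruct (Nat.eqb_spec i j); tauto. Qed.

Lemma model_M1f n G u x S : good n G -> dir G u x -> (forall y, ~ A G y u) ->
  in_model n G S -> in_model n (gM1f G u x) S.
Proof.
  intros Hg Hd Hn [L [W [Minv [HL [HM1 [HM2 [HW [HWs HS]]]]]]]].
  pose proof Hg as [[W1 [W2 W3]] [Ac Bf]].
  destruct (W1 u x Hd) as [Hu [Hx Hux]].
  set (c := L u x).
  set (IL := fun a b => idm a b - L a b).
  assert (Liu : forall i, (i < n)%nat -> L i u = 0).
  { intros i Hi. destruct (Nat.lt_ge_cases u n); [|lia]. apply HL; auto. intros H0; apply (Hn i); left; auto. }
  assert (Wzu : forall a, (a < n)%nat -> a <> u -> W a u = 0).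
  { intros a Ha Hau. apply HWs; auto. intros H0; apply (Hn a); right; auto. }
  assert (Wuz : forall a, (a < n)%nat -> a <> u -> W u a = 0).
  { intros a Ha Hau. apply HWs; auto. intros H0; apply (Hn a); right; apply (bidir_sym n G u a); [apply Hg|auto]. }
  apply (reparam n _ S L W Minv (Pm u x 0 c 0 0) (Pm u x 0 (-c) 0 0) (fun i j => idm i j - mmul n IL (Pm u x 0 c 0 0) i j)).
  - auto.
  - auto.
  - auto.
  - auto.
  - intros; apply PmQ_inv; auto; ring.
  - intros; apply PmQ_inv; auto; ring.
  - intros; unfold IL; ring.
  - intros i j Hi Hj Hd'. simpl in Hd'. rewrite mmul_Pm by auto. unfold IL.
    rewrite (Liu i Hi).
    destruct (classic (i = u /\ j = x)) as [[E1 E2]|Hne].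
    + subst. rewrite !idm_eq, (idm_neq x u) by auto. unfold c. ring.
    + rewrite (HL i j) by (auto; tauto).
      replace (c * (idm i u - 0) * idm j x) with (c * (idm i u * idm j x)) by ring.
      rewrite (idm_prod0 i j u x Hne). ring.
  - intros i j Hi Hj Hij Hb. simpl in Hb. rewrite quad_Pm by auto. cbv zeta.
    assert (Wij : W i j = 0) by (apply HWs; auto).
    destruct (Nat.eq_dec j x) as [->|Hjx].
    + assert (i <> u) by (intros ->; apply Hb; auto).
      rewrite (idm_neq i x), (idm_neq x u), idm_eq by auto.
      rewrite Wzu, Wij by auto. ring.
    + rewrite (idm_neq j x) by auto. destruct (Nat.eq_dec i x) as [->|Hix].
      * assert (j <> u) by (intros ->; apply Hb; right; right; auto). rewrite (Wuz j) by auto. rewrite Wij. ring.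
      * rewrite (idm_neq i x) by auto. rewrite Wij. ring.
Qed.

Lemma model_M1b n G u x S : good n G -> bidir G u x -> (forall y, A G y u -> y = x) ->
  in_model n G S -> in_model n (gM1b G u x) S.
Proof.
  intros Hg Hb Hh [L [W [Minv [HL [HM1 [HM2 [HW [HWs HS]]]]]]]].
  pose proof Hg as [[W1 [W2 W3]] [Ac Bf]].
  destruct (W2 u x Hb) as [Hu [Hx Hux]].
  assert (Hxu : ~ dir G x u). { intros H0. apply (Bf x u); auto. }
  pose proof (diag_pos n W u HW Hu) as Wuu.
  set (c := W x u / W u u).
  set (IL := fun a b => idm a b - L a b).
  assert (Liu : forall i, (i < n)%nat -> L i u = 0).
  { intros i Hi. apply HL; auto. intros H0. assert (i = x) by (apply Hh; left; auto). subst; auto. }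
  assert (Wzu : forall a, (a < n)%nat -> a <> u -> a <> x -> W a u = 0).
  { intros a Ha Hau Hax. apply HWs; auto. intros H0; apply Hax; apply Hh; right; auto. }
  assert (Wuz : forall a, (a < n)%nat -> a <> u -> a <> x -> W u a = 0).
  { intros a Ha Hau Hax. apply HWs; auto. intros H0; apply Hax; apply Hh; right; apply (bidir_sym n G u a); [apply Hg|auto]. }
  apply (reparam n _ S L W Minv (Pm u x 0 (-c) 0 0) (Pm u x 0 c 0 0) (fun i j => idm i j - mmul n IL (Pm u x 0 (-c) 0 0) i j)).
  - auto.
  - auto.
  - auto.
  - auto.
  - intros; apply PmQ_inv; auto; ring.
  - intros; apply PmQ_inv; auto; ring.
  - intros; unfold IL; ring.
  - intros i j Hi Hj Hd'. simpl in Hd'. rewrite mmul_Pm by auto. unfold IL.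
    rewrite (Liu i Hi).
    assert (Hne : ~ (i = u /\ j = x)) by tauto.
    rewrite (HL i j) by (auto; tauto).
    replace ((-c) * (idm i u - 0) * idm j x) with ((-c) * (idm i u * idm j x)) by ring.
    rewrite (idm_prod0 i j u x Hne). ring.
  - intros i j Hi Hj Hij Hb'. simpl in Hb'. rewrite quad_Pm by auto. cbv zeta.
    destruct (classic (i = u /\ j = x)) as [[E1 E2]|N1].
    { subst. rewrite (idm_neq u x), (idm_neq x u), !idm_eq by auto. unfold c. rewrite (proj1 HW u x) by auto. field. lra. }
    destruct (classic (i = x /\ j = u)) as [[E1 E2]|N2].
    { subst. rewrite (idm_neq u x), (idm_neq x u), !idm_eq by auto. unfold c. field. lra. }
    assert (Wij : W i j = 0) by (apply HWs; auto; tauto).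
    destruct (Nat.eq_dec j x) as [->|Hjx].
    + assert (i <> u) by (intros ->; tauto).
      rewrite (idm_neq i x), idm_eq by auto.
      rewrite (Wzu i), Wij by auto. ring.
    + rewrite (idm_neq j x) by auto. destruct (Nat.eq_dec i x) as [->|Hix].
      * assert (j <> u) by (intros ->; tauto). rewrite (Wuz j) by auto. rewrite Wij. ring.
      * rewrite (idm_neq i x) by auto. rewrite Wij. ring.
Qed.

Lemma model_M2 n G u x S : good n G -> dir G u x -> (forall y, ~ A G y u) -> (forall y, A G y x -> y = u) ->
  in_model n G S -> in_model n (gM2 G u x) S.
Proof.
  intros Hg Hd Hn Hh [L [W [Minv [HL [HM1 [HM2 [HW [HWs HS]]]]]]]].
  pose proof Hg as [[W1 [W2 W3]] [Ac Bf]].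
  destruct (W1 u x Hd) as [Hu [Hx Hux]].
  pose proof (diag_pos n W u HW Hu) as Wuu.
  pose proof (diag_pos n W x HW Hx) as Wxx.
  set (l := L u x). set (a := W u u). set (b := W x x).
  assert (Hden : l * l * a + b <> 0) by (unfold a, b; nra).
  set (m := l * a / (l * l * a + b)).
  set (IL := fun a b => idm a b - L a b).
  assert (Liu : forall i, (i < n)%nat -> L i u = 0).
  { intros i Hi. apply HL; auto. intros H0; apply (Hn i); left; auto. }
  assert (Lix : forall i, (i < n)%nat -> i <> u -> L i x = 0).
  { intros i Hi Hiu. apply HL; auto. intros H0; apply Hiu; apply Hh; left; auto. }
  assert (Wzu : forall a, (a < n)%nat -> a <> u -> W a u = 0).
  { intros a0 Ha Hau. apply HWs; auto. intros H0; apply (Hn a0); right; auto. }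
  assert (Wuz : forall a, (a < n)%nat -> a <> u -> W u a = 0).
  { intros a0 Ha Hau. apply HWs; auto. intros H0; apply (Hn a0); right; apply (bidir_sym n G u a0); [apply Hg|auto]. }
  assert (Wzx : forall a, (a < n)%nat -> a <> x -> W a x = 0).
  { intros a0 Ha Hax. apply HWs; auto. intros H0. assert (a0 = u) by (apply Hh; right; auto). subst.
    apply (Bf u x); auto. }
  assert (Wxz : forall a, (a < n)%nat -> a <> x -> W x a = 0).
  { intros a0 Ha Hax. rewrite (proj1 HW) by auto. auto. }
  apply (reparam n _ S L W Minv (Pm u x (-(l*m)) l (-m) 0) (Pm u x 0 (-l) m (-(l*m)))
     (fun i j => idm i j - mmul n IL (Pm u x (-(l*m)) l (-m) 0) i j)).
  - auto.
  - auto.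
  - auto.
  - auto.
  - intros; apply PmQ_inv; auto; ring.
  - intros; apply PmQ_inv; auto; ring.
  - intros; unfold IL; ring.
  - intros i j Hi Hj Hd'. simpl in Hd'. rewrite mmul_Pm by auto. unfold IL.
    rewrite (Liu i Hi).
    destruct (classic (i = u /\ j = x)) as [[E1 E2]|N1].
    { subst. rewrite (idm_neq u x), (idm_neq x u), !idm_eq by auto. fold l. ring. }
    assert (N2 : ~ (i = x /\ j = u)) by tauto.
    rewrite (HL i j) by (auto; tauto).
    destruct (Nat.eq_dec j u) as [->|Hju].
    + rewrite (idm_neq u x), idm_eq by auto.
      destruct (Nat.eq_dec i u) as [->|Hiu].
      * rewrite (idm_neq u x), idm_eq by auto. fold l. ring.
      * rewrite (idm_neq i u), (Lix i), (idm_neq i x) by (auto; intros ->; tauto). ring.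
    + rewrite (idm_neq j u) by auto.
      destruct (Nat.eq_dec j x) as [->|Hjx].
      * rewrite (idm_neq i u) by (intros ->; tauto). ring.
      * rewrite (idm_neq j x) by auto. ring.
  - intros i j Hi Hj Hij Hb'. simpl in Hb'. rewrite quad_Pm by auto. cbv zeta.
    destruct (classic (i = u /\ j = x)) as [[E1 E2]|N1].
    { subst. rewrite (idm_neq u x), (idm_neq x u), !idm_eq by auto.
      rewrite (Wuz x), (Wxz u) by auto. fold a b. unfold m. field. auto. }
    destruct (classic (i = x /\ j = u)) as [[E1 E2]|N2].
    { subst. rewrite (idm_neq u x), (idm_neq x u), !idm_eq by auto.
      rewrite (Wuz x), (Wxz u) by auto. fold a b. unfold m. field. auto. }
    assert (Wij : W i j = 0) by (apply HWs; auto).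
    destruct (Nat.eq_dec j u) as [->|Hju].
    + assert (i <> u) by auto. assert (i <> x) by (intros ->; tauto).
      rewrite (idm_neq i u), (idm_neq i x), (idm_neq u x), idm_eq by auto.
      rewrite (Wzx i) by auto. rewrite Wij. ring.
    + destruct (Nat.eq_dec j x) as [->|Hjx].
      * assert (i <> u) by (intros ->; tauto). assert (i <> x) by auto.
        rewrite (idm_neq i u), (idm_neq i x), (idm_neq x u), idm_eq by auto.
        rewrite (Wzu i) by auto. rewrite Wij. ring.
      * rewrite (idm_neq j u), (idm_neq j x) by auto.
        rewrite (Wuz j), (Wxz j) by auto. rewrite Wij. ring.
Qed.

Close Scope R_scope.

Definition better n G1 G2 G1' := good n G1' /\ SK G1' G2 /\ PC G1' G2 /\
  (mdist n G1' G2 < mdist n G1 G2)%nat /\ (forall S, in_model n G1 S -> in_model n G1' S).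

Lemma better_M1f n G1 G2 u x : good n G1 -> SK G1 G2 -> PC G1 G2 -> (forall y, ~ A G1 y u) ->
  dir G1 u x -> A G2 x u -> better n G1 G2 (gM1f G1 u x).
Proof.
  intros Hg Hs Hp Hn Hd H2.
  pose proof (good_M1f n G1 u x Hg Hd) as Hg'.
  pose proof Hg as [[W1 _] _]. destruct (W1 u x Hd) as [Hu [Hx Hux]].
  assert (Aux : A G1 u x) by (left; auto).
  assert (E := fun a b => A_M1f n G1 u x a b Hg Hd).
  split; [auto|split; [|split; [|split]]].
  - apply (SK_preserve n G1); auto. apply Hg. apply Hg'.
    intros a b. rewrite (E a b), (E b a). split.
    + intros [[H|[-> ->]]|[H|[-> ->]]]; auto.
    + intros [H|H]; auto.
  - apply (PC_preserve G1); auto. intros z.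
    destruct (Nat.eq_dec z u) as [->|Hz].
    + right. split.
      * intros a b Ha Hb. apply E in Ha, Hb.
        destruct Ha as [Ha|[-> _]]; [exfalso; eapply Hn; eauto|].
        destruct Hb as [Hb|[-> _]]; [exfalso; eapply Hn; eauto|auto].
      * intros a b Ha; exfalso; eapply Hn; eauto.
    + left. intros y. rewrite E. split; [intros [H|[_ H]]; [auto|congruence]|auto].
  - apply mdist_lt.
    + intros c y Hc Hy. unfold MD. rewrite E.
      destruct (classic (y = x /\ c = u)) as [[-> ->]|N]; [tauto|].
      intros H H'. apply H. split; [intros [H0|H0]; [apply H'; auto|tauto]|intros; left; apply H'; auto].
    + exists u, x. repeat split; auto.
      * unfold MD. intros H. apply (Hn x). apply H; auto.
      * unfold MD. intros H. apply H. rewrite E. split; auto.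
  - intros S; apply model_M1f; auto.
Qed.

Lemma better_M1b n G1 G2 u x : good n G1 -> SK G1 G2 -> PC G1 G2 -> bidir G1 u x ->
  (forall y, A G1 y u -> y = x) -> ~ A G2 x u -> better n G1 G2 (gM1b G1 u x).
Proof.
  intros Hg Hs Hp Hb Hh H2.
  pose proof (good_M1b n G1 u x Hg Hb Hh) as Hg'.
  pose proof Hg as [[W1 [W2 W3]] _]. destruct (W2 u x Hb) as [Hu [Hx Hux]].
  assert (Aux : A G1 u x) by (right; auto).
  assert (Axu : A G1 x u) by (right; auto).
  assert (E := fun a b => A_M1b n G1 u x a b Hg Hb).
  split; [auto|split; [|split; [|split]]].
  - apply (SK_preserve n G1); auto. apply Hg. apply Hg'.
    intros a b. rewrite (E a b), (E b a). split.
    + intros [[H _]|[H _]]; auto.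
    + intros [H|H].
      * destruct (classic (a = x /\ b = u)) as [[-> ->]|N]; [right; split; auto; intros [? ?]; congruence|left; auto].
      * destruct (classic (b = x /\ a = u)) as [[-> ->]|N]; [left; split; auto; intros [? ?]; congruence|right; auto].
  - apply (PC_preserve G1); auto. intros z.
    destruct (Nat.eq_dec z u) as [->|Hz].
    + right. split.
      * intros a b Ha Hb1. apply E in Ha. destruct Ha as [Ha Ha']. exfalso; apply Ha'; split; [apply Hh; auto|auto].
      * intros a b Ha Hb1. rewrite (Hh a Ha), (Hh b Hb1); auto.
    + left. intros y. rewrite E. split; [intros [H _]; auto|intros H; split; auto; intros [_ ?]; congruence].
  - apply mdist_lt.
    + intros c y Hc Hy. unfold MD. rewrite E.
      destruct (classic (y = x /\ c = u)) as [[-> ->]|N]; [tauto|].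
      intros H H'. apply H. split; [intros [H0 _]; apply H'; auto|intros H0; split; [apply H'; auto|auto]].
    + exists u, x. repeat split; auto.
      * unfold MD. intros H. apply H2. apply H; auto.
      * unfold MD. intros H. apply H. rewrite E. split; [intros [_ H0]; exfalso; apply H0; auto|intros H0; contradiction].
  - intros S; apply model_M1b; auto.
Qed.

Lemma better_M2 n G1 G2 u x : good n G1 -> SK G1 G2 -> PC G1 G2 -> dir G1 u x ->
  (forall y, ~ A G1 y u) -> (forall y, A G1 y x -> y = u) -> A G2 x u -> ~ A G2 u x ->
  better n G1 G2 (gM2 G1 u x).
Proof.
  intros Hg Hs Hp Hd Hn Hh H2 H2'.
  pose proof (good_M2 n G1 u x Hg Hd Hn Hh) as Hg'.
  pose proof Hg as [[W1 [W2 W3]] _]. destruct (W1 u x Hd) as [Hu [Hx Hux]].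
  assert (Aux : A G1 u x) by (left; auto).
  assert (E := fun a b => A_M2 n G1 u x a b Hg Hd).
  split; [auto|split; [|split; [|split]]].
  - apply (SK_preserve n G1); auto. apply Hg. apply Hg'.
    intros a b. rewrite (E a b), (E b a). split.
    + intros [[[H _]|[-> ->]]|[[H _]|[-> ->]]]; auto.
    + intros [H|H].
      * destruct (classic (a = u /\ b = x)) as [[-> ->]|N]; [right; right; auto|left; left; auto].
      * destruct (classic (b = u /\ a = x)) as [[-> ->]|N]; [left; right; auto|right; left; auto].
  - apply (PC_preserve G1); auto. intros z.
    destruct (Nat.eq_dec z u) as [->|Hzu]; [|destruct (Nat.eq_dec z x) as [->|Hzx]].
    + right. split.
      * intros a b Ha Hb. apply E in Ha, Hb.
        destruct Ha as [[Ha _]|[-> _]]; [exfalso; eapply Hn; eauto|].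
        destruct Hb as [[Hb _]|[-> _]]; [exfalso; eapply Hn; eauto|auto].
      * intros a b Ha; exfalso; eapply Hn; eauto.
    + right. split.
      * intros a b Ha Hb. apply E in Ha. exfalso.
        destruct Ha as [[Ha Ha']|[_ Ha]]; [apply Ha'; split; auto|congruence].
      * intros a b Ha Hb. rewrite (Hh a Ha), (Hh b Hb); auto.
    + left. intros y. rewrite E. split.
      * intros [[H _]|[_ H]]; [auto|congruence].
      * intros H; left; split; auto; intros [_ ?]; congruence.
  - apply mdist_lt.
    + intros c y Hc Hy. unfold MD. rewrite E.
      destruct (classic (y = x /\ c = u)) as [[-> ->]|N]; [tauto|].
      destruct (classic (y = u /\ c = x)) as [[-> ->]|N']; [tauto|].
      intros H H'. apply H. split.
      * intros [[H0 _]|H0]; [apply H'; auto|tauto].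
      * intros H0; left; split; [apply H'; auto|auto].
    + exists u, x. repeat split; auto.
      * unfold MD. intros H. apply (Hn x). apply H; auto.
      * unfold MD. intros H. apply H. rewrite E. split; auto.
  - intros S; apply model_M2; auto.
Qed.

Close Scope R_scope.

Lemma move_exists n G1 G2 : good n G1 -> good n G2 -> SK G1 G2 -> PC G1 G2 ->
  forall k u, (ac n G1 u < k)%nat -> (u < n)%nat -> (exists y, (y < n)%nat /\ MD G1 G2 u y) ->
  exists G1', better n G1 G2 G1'.
Proof.
  intros Hg1 Hg2 Hs Hp. pose proof Hp as [P1 P2].
  induction k; intros u Hk Hu [y [Hy Hmd]]; [lia|].
  destruct (classic (exists w, A G1 w u)) as [[w Hw]|Hnone].
  - assert (Hh : forall z, A G1 z u -> z = w).
    { intros z Hz. apply NNPP; intros Hzw. apply Hmd.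
      assert (A2w : A G2 w u) by (apply (P1 w z u); auto).
      split.
      - intros Hy1. destruct (Nat.eq_dec y w) as [->|Hyw]; auto. apply (P1 y w u Hyw Hy1 Hw).
      - intros Hy2. destruct (Nat.eq_dec y w) as [->|Hyw]; auto. apply (P2 y w u Hyw Hy2 A2w). }
    assert (Nw : ~ A G2 w u).
    { intros Hw2. apply Hmd. split; intros H.
      - rewrite (Hh y H); auto.
      - destruct (Nat.eq_dec y w) as [->|Hyw]; auto. exact (P2 y w u Hyw H Hw2). }
    destruct (classic (A G1 u w)) as [Huw|Nuw].
    + exists (gM1b G1 u w). apply better_M1b; auto. apply (A_bidir n G1 u w); auto.
    + assert (Hdwu : dir G1 w u) by (apply (A_dir n G1 w u); auto).
      assert (Sk : skel G2 w u). { apply Hs. apply (skel_iff n G1 w u); [apply Hg1|auto]. }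
      apply (skel_iff n G2 w u) in Sk; [|apply Hg2].
      destruct Sk as [Sk|Sk]; [contradiction|].
      destruct (A_lt n G1 w u) as [Hwn _]; [apply Hg1|auto|].
      apply (IHk w); auto.
      * pose proof (ac_lt n G1 w u Hg1 Hdwu). lia.
      * exists u; split; auto. unfold MD. intros H. apply Nuw. apply H; auto.
  - assert (Hn : forall z, ~ A G1 z u) by (intros z Hz; apply Hnone; exists z; auto).
    assert (A2y : A G2 y u).
    { apply NNPP; intros H. apply Hmd. split; intros H'; [exfalso; eapply Hn; eauto|contradiction]. }
    assert (Sk : skel G1 y u). { apply Hs. apply (skel_iff n G2 y u); [apply Hg2|auto]. }
    apply (skel_iff n G1 y u) in Sk; [|apply Hg1].
    destruct Sk as [Sk|Sk]; [exfalso; eapply Hn; eauto|].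
    assert (Hd : dir G1 u y) by (apply (A_dir n G1 u y); auto).
    destruct (classic (A G2 u y)) as [H2|H2].
    + exists (gM1f G1 u y). apply better_M1f; auto.
    + exists (gM2 G1 u y). apply better_M2; auto.
      intros z Hz. apply NNPP; intros Hzu. apply H2. apply (P1 u z y); auto.
Qed.

Lemma main_incl n G2 : forall k G1, (mdist n G1 G2 < k)%nat -> good n G1 -> good n G2 -> SK G1 G2 -> PC G1 G2 ->
  forall S, in_model n G1 S -> in_model n G2 S.
Proof.
  induction k; intros G1 Hk Hg1 Hg2 Hs Hp S HS; [lia|].
  destruct (classic (exists c y, (c < n)%nat /\ (y < n)%nat /\ MD G1 G2 c y)) as [[c [y [Hc [Hy Hmd]]]]|Hno].
  - destruct (move_exists n G1 G2 Hg1 Hg2 Hs Hp (Datatypes.S (ac n G1 c)) c ltac:(lia) Hc ltac:(exists y; auto))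
      as [G1' [Hg' [Hs' [Hp' [Hd' Hm']]]]].
    apply (IHk G1'); auto. lia.
  - apply (model_same n G1 G2); auto. intros c y Hc Hy H. apply Hno. exists c, y; auto.
Qed.

Close Scope R_scope.

Theorem proposition1 (n : nat) (G1 G2 : mixed_graph) :
  wf_graph n G1 -> wf_graph n G2 ->
  acyclic G1 -> acyclic G2 ->
  bow_free G1 -> bow_free G2 ->
  (forall i j, skel G1 i j <-> skel G2 i j) ->
  (forall v1 v2 v3, skel_path3 n G1 v1 v2 v3 ->
     (collider n G1 v1 v2 v3 <-> collider n G2 v1 v2 v3)) ->
  alg_equivalent n G1 G2.
Proof.
  intros W1 W2 Ac1 Ac2 B1 B2 Hs Hc.
  assert (Hg1 : good n G1) by (split; auto). assert (Hg2 : good n G2) by (split; auto).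
  assert (Hp : PC G1 G2).
  { split.
    - intros a b c Hab Ha Hb.
      destruct (A_lt n G1 a c W1 Ha) as [Han [Hcn Hac]].
      destruct (A_lt n G1 b c W1 Hb) as [Hbn [_ Hbc]].
      assert (P3 : skel_path3 n G1 a c b).
      { repeat split; auto.
        - apply (skel_iff n G1 a c W1); auto.
        - apply (skel_iff n G1 c b W1); auto. }
      assert (Hcol : collider n G1 a c b) by (split; auto).
      apply (Hc a c b P3) in Hcol. apply Hcol.
    - intros a b c Hab Ha Hb.
      destruct (A_lt n G2 a c W2 Ha) as [Han [Hcn Hac]].
      destruct (A_lt n G2 b c W2 Hb) as [Hbn [_ Hbc]].
      assert (P3 : skel_path3 n G1 a c b).
      { repeat split; auto.
        - apply Hs. apply (skel_iff n G2 a c W2); auto.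
        - apply Hs. apply (skel_iff n G2 c b W2); auto. }
      assert (Hcol : collider n G2 a c b).
      { split; auto. repeat split; auto.
        - apply (skel_iff n G2 a c W2); auto.
        - apply (skel_iff n G2 c b W2); auto. }
      apply (Hc a c b P3) in Hcol. apply Hcol. }
  assert (I12 : forall S, in_model n G1 S -> in_model n G2 S).
  { apply (main_incl n G2 (Datatypes.S (mdist n G1 G2)) G1); auto. }
  assert (I21 : forall S, in_model n G2 S -> in_model n G1 S).
  { apply (main_incl n G1 (Datatypes.S (mdist n G2 G1)) G2); auto.
    - intros i j; symmetry; apply Hs.
    - destruct Hp as [P1 P2]; split; auto. }
  intros S. split.
  - intros H p Hp0. apply H. intros T HT. apply Hp0; auto.
  - intros H p Hp0. apply H. intros T HT. apply Hp0; auto.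
Qed.
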